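(* Let $G=(\mathbb Z/a_1\mathbb Z)\times\dots\times(\mathbb Z/a_r\mathbb Z)$ be a finite Abelian group with $N=\exp(G)$ odd, and let $f:G\to\mathbb Q$ be rational-valued. Then for every $x\in\operatorname{supp}(\widehat f)$, all denominators below are nonzero and $$\widehat f(x)^{2^{\phi(N)}-1}=\prod_{k=0}^{\phi(N)-1}\left(\frac{\widehat M_3(f;2^kx,2^kx)}{\widehat M_2(f;2^{k+1}x)}\right)^{2^{\phi(N)-1-k}},$$ where $\phi$ is Euler's phi function.
   Context: Elements of $G$ are tuples with componentwise addition modulo $a_k$; $\exp(G)=\min\{n>0: nx=0\ \forall x\in G\}$. Define $\chi(x,y)=\exp\left(2\pi i\sum_{k=1}^r \frac{x[k]y[k]}{a_k}\right)$, $\widehat f(x)=\sum_{y\in G}f(y)\overline{\chi(x,y)}$, and $\operatorname{supp}(\widehat f)=\{x\in G:\widehat f(x)\neq 0\}$. The transformed autocorrelations are $\widehat M_n(f;x_1,\dots,x_{n-1})=\widehat f(x_1)\cdots\widehat f(x_{n-1})\widehat f(-(x_1+\dots+x_{n-1}))$; in particular $\widehat M_3(f;y,y)=\widehat f(y)^2\widehat f(-2y)$ and $\widehat M_2(f;y)=\widehat f(y)\widehat f(-y)$. *)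

(* Defs.v *)
From HB Require Import structures.
From mathcomp Require Import all_boot all_order all_algebra.
From mathcomp Require Import reals trigo.
From mathcomp Require Import complex.
Set Implicit Arguments. Unset Strict Implicit. Unset Printing Implicit Defensive.
Import Order.TTheory GRing.Theory Num.Theory.
Local Open Scope ring_scope.

Definition grp (r : nat) (a : 'I_r -> nat) : finType :=
  {dffun forall k : 'I_r, 'I_(a k)}.

Lemma ord_pos n (i : 'I_n) : (0 < n)%N.
Proof. exact: leq_ltn_trans (leq0n i) (ltn_ord i). Qed.

Section Group.
Variables (r : nat) (a : 'I_r -> nat).

Definition gadd (x y : grp a) : grp a :=
  [ffun k => Ordinal (ltn_pmod (x k + y k) (ord_pos (x k)))].
Definition gopp (x : grp a) : grp a :=
  [ffun k => Ordinal (ltn_pmod (a k - x k) (ord_pos (x k)))].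
Definition gscale (n : nat) (x : grp a) : grp a :=
  [ffun k => Ordinal (ltn_pmod (n * x k) (ord_pos (x k)))].
Definition gis0 (x : grp a) : Prop := forall k, nat_of_ord (x k) = 0%N.

Definition is_exponent (N : nat) : Prop :=
  (0 < N)%N /\ (forall x : grp a, gis0 (gscale N x)) /\
  (forall n, (0 < n)%N -> (forall x : grp a, gis0 (gscale n x)) -> (N <= n)%N).

Variable R : realType.

Definition chi (x y : grp a) : R[i] :=
  let t := 2 * pi * \sum_(k < r) ((x k * y k)%:R / (a k)%:R) in
  Complex (cos t) (sin t).

Definition fhat (f : grp a -> rat) (x : grp a) : R[i] :=
  \sum_(y : grp a) ratr (f y) * (chi x y)^*.

Definition Mhat3 (f : grp a -> rat) (y1 y2 : grp a) : R[i] :=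
  fhat f y1 * fhat f y2 * fhat f (gopp (gadd y1 y2)).
Definition Mhat2 (f : grp a -> rat) (y : grp a) : R[i] :=
  fhat f y * fhat f (gopp y).

End Group.

(* Main.v *)
Require Import Defs.
From HB Require Import structures.
From mathcomp Require Import all_boot all_order all_algebra all_solvable all_field.
From mathcomp Require Import reals trigo.
From mathcomp Require Import complex.
From mathcomp Require Import ring zify.
Import Order.TTheory GRing.Theory Num.Theory.
Local Open Scope ring_scope.


Lemma Phi_map_rat (K : numFieldType) n :
  map_poly (ratr : rat -> K) (map_poly intr 'Phi_n) = map_poly intr 'Phi_n.
Proof. by rewrite -map_poly_comp; apply: eq_map_poly => b /=; rewrite rmorph_int. Qed.

Lemma Phi_root_unity (K : numFieldType) d (w : K) : (0 < d)%N ->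
  root (map_poly intr 'Phi_d) w -> w ^+ d = 1.
Proof.
move=> d0 hr.
have : root (map_poly (intr : int -> K) ('X^d - 1)) w.
  have E : 'X^d - 1 = 'Phi_d * \prod_(y <- rem d (divisors d)) 'Phi_y :> {poly int}.
    by rewrite -(prod_Cyclotomic d0) (big_rem d) // -dvdn_divisors.
  rewrite E rmorphM /=.
  by rewrite rootM hr.
by rewrite rmorphB rmorph1 /= map_polyXn rootE !hornerE subr_eq0 => /eqP.
Qed.

Lemma Phi_root (K : numFieldType) n (w : K) : n.-primitive_root w ->
  root (map_poly intr 'Phi_n) w.
Proof.
move=> pw; have n0 := prim_order_gt0 pw.
have : root (map_poly (intr : int -> K) ('X^n - 1)) w.
  rewrite rmorphB rmorph1 /= map_polyXn rootE !hornerE subr_eq0.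
  by rewrite prim_expr_order.
rewrite -(prod_Cyclotomic n0) rmorph_prod /=.
rewrite rootE horner_prod prodf_seq_eq0 => /hasP[d dd /= hd].
have dn : (d %| n)%N by rewrite dvdn_divisors.
have [<-|dnn] := eqVneq d n; first exact: hd.
exfalso.

have d0 : (0 < d)%N by apply: dvdn_gt0 dn.
have := @Phi_root_unity _ d w d0 hd; move/eqP; rewrite -(prim_order_dvd pw) => nd.
by move/negP: dnn; apply; rewrite eqn_dvd nd dn.
Qed.

Lemma cyc_dvd (K : numFieldType) n (w : K) (q : {poly rat}) :
  n.-primitive_root w -> root (map_poly ratr q) w ->
  map_poly intr 'Phi_n %| q.
Proof.
move=> pw hq; have n0 := prim_order_gt0 pw.
set pf : {poly rat} := map_poly intr 'Phi_n.
have pf0 : pf != 0.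
  by apply: monic_neq0; apply: monic_map; apply: Cyclotomic_monic.
pose g := gcdp q pf.
have g0 : g != 0 by rewrite gcdp_eq0 negb_and pf0 orbT.
have hg : root (map_poly (ratr : rat -> K) g) w.
  by rewrite gcdp_map root_gcd hq Phi_map_rat Phi_root.
have sg : size (map_poly (ratr : rat -> algC) g) != 1%N.
  have mg0 : map_poly (ratr : rat -> K) g != 0 by rewrite map_poly_eq0.
  have := root_size_gt1 mg0 hg; rewrite !size_map_poly => h.
  by rewrite neq_ltn h orbT.
have [zc hzc] := closed_rootP _ sg.
have [z0 pz0] := C_prim_root_exists n0.
have hpf : map_poly (ratr : rat -> algC) pf = map_poly intr 'Phi_n.
  by rewrite Phi_map_rat.
have pzc : n.-primitive_root zc.
  rewrite -(root_cyclotomic pz0) -(Cintr_Cyclotomic pz0) -hpf.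
  apply: root_dvdp hzc; rewrite dvdp_map; exact: dvdp_gcdr.
have [p0 [Dp0 _] Hp0] := minCpolyP zc.
have ep : p0 = pf.
  apply: (map_inj_poly (fmorph_inj (ratr : rat -> algC))) => //.
    exact: rmorph0.
  apply: (etrans (esym Dp0)); rewrite (minCpoly_cyclotomic pzc).
  by rewrite -(Cintr_Cyclotomic pzc) hpf.
apply: (@dvdp_trans _ g); last exact: dvdp_gcdl.
by rewrite -ep -Hp0.
Qed.

Lemma galois_root (K : numFieldType) n (w : K) (q : {poly rat}) k :
  n.-primitive_root w -> coprime k n ->
  root (map_poly ratr q) (w ^+ k) -> root (map_poly ratr q) w.
Proof.
move=> pw ck hk.
have pwk : n.-primitive_root (w ^+ k) by rewrite prim_root_exp_coprime.
have hd := @cyc_dvd K n (w ^+ k) q pwk hk.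
apply: root_dvdp (@Phi_root K n w pw); rewrite -Phi_map_rat dvdp_map //.
Qed.

Section Four.
Variable R : realType.

Definition expi (t : R) : R[i] := Complex (cos t) (sin t).

Lemma expiD s t : expi (s + t) = expi s * expi t.
Proof.
rewrite /expi cosD sinD; apply/eqP; rewrite eq_complex /=.
by apply/andP; split; apply/eqP; ring.
Qed.

Lemma expiMn m t : expi (m%:R * t) = expi t ^+ m.
Proof.
elim: m => [|m IH]; first by rewrite mul0r expr0 /expi cos0 sin0.
by rewrite exprS -IH -expiD mulrSr mulrDl mul1r addrC.
Qed.

Variables (r : nat) (a : 'I_r -> nat) (N : nat).
Hypothesis N0 : (0 < N)%N.
Hypothesis aN : forall k, (a k %| N)%N.

Lemma a0 k : (0 < a k)%N.
Proof. by apply: dvdn_gt0 N0 (aN k). Qed.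

Definition zeta := expi (2 * pi / N%:R).

Lemma zetaN : zeta ^+ N = 1.
Proof.
rewrite /zeta -expiMn mulrCA divff ?pnatr_eq0 -?lt0n // mulr1.
by rewrite /expi mulr_natl cos2pi sin2pi.
Qed.

Definition mm (x y : grp a) : nat := \sum_(k < r) (x k * y k * (N %/ a k))%N.

Lemma chiE x y : chi R x y = zeta ^+ mm x y.
Proof.
rewrite /chi /zeta -expiMn; congr expi.
rewrite /mm natr_sum mulr_suml mulr_sumr; apply: eq_bigr => k _.
have hk := a0 k.
have ha : (a k)%:R != 0 :> R by rewrite pnatr_eq0 -lt0n.
have hNa : (N %/ a k)%:R != 0 :> R.
  by rewrite pnatr_eq0 -lt0n divn_gt0 // dvdn_leq.
have -> : N%:R = (N %/ a k)%:R * (a k)%:R :> R by rewrite -natrM divnK.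
rewrite !natrM; field.
by rewrite ha hNa.
Qed.

Definition om : R[i] := (zeta)^*.

Lemma omN : om ^+ N = 1.
Proof. by rewrite /om -rmorphXn zetaN rmorph1. Qed.

Lemma fhatE (f : grp a -> rat) z :
  fhat R f z = \sum_y ratr (f y) * om ^+ mm z y.
Proof.
by apply: eq_bigr => y _; rewrite chiE /om rmorphXn.
Qed.

Lemma modM_mul u v c b : u = v %[mod c] -> (u * b = v * b %[mod c * b])%N.
Proof. by move=> h; rewrite -!muln_modl h. Qed.

Lemma mm_cong (x z : grp a) k :
  (forall i, z i = k * x i %[mod a i])%N -> forall y, (mm z y = k * mm x y %[mod N])%N.
Proof.
move=> h y; rewrite /mm big_distrr /= -modn_summ [in RHS]/= -[in RHS]modn_summ.
congr (_ %% _)%N; apply: eq_bigr => i _.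
have E : N = (a i * (N %/ a i))%N by rewrite mulnC divnK.
have H : (z i * y i * (N %/ a i) = k * x i * y i * (N %/ a i) %[mod a i * (N %/ a i)])%N.
  by apply: modM_mul; rewrite -modnMml h modnMml.
by rewrite -E in H; rewrite H !mulnA.
Qed.

Definition Pol (f : grp a -> rat) (x : grp a) : {poly rat} :=
  \sum_y f y *: 'X^(mm x y).

Lemma fhat_pol (f : grp a -> rat) (x z : grp a) k :
  (forall i, z i = k * x i %[mod a i])%N ->
  fhat R f z = (map_poly ratr (Pol f x)).[om ^+ k].
Proof.
move=> h; rewrite fhatE /Pol rmorph_sum horner_sum; apply: eq_bigr => y _.
rewrite /= map_polyZ map_polyXn hornerZ hornerXn -exprM.
by rewrite -(expr_mod _ omN) (@mm_cong x z k h y) expr_mod // omN.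
Qed.
End Four.

Lemma telesc (K : fieldType) (F : nat -> K) n : (forall j, F j != 0) ->
  \prod_(k < n) (F k ^+ 2 / F k.+1) ^+ (2 ^ (n - 1 - k)) = F 0%N ^+ (2 ^ n) / F n.
Proof.
move=> hF; elim: n => [|n IH]; first by rewrite big_ord0 expn0 expr1 divff.
rewrite big_ord_recr /=.
have -> : (n.+1 - 1 - n = 0)%N by rewrite subn1 subnn.
rewrite expn0 expr1.
have -> : \prod_(i < n) (F i ^+ 2 / F i.+1) ^+ (2 ^ (n.+1 - 1 - i))
   = (\prod_(i < n) (F i ^+ 2 / F i.+1) ^+ (2 ^ (n - 1 - i))) ^+ 2.
  rewrite -prodrXl; apply: eq_bigr => i _; rewrite -exprM; congr (_ ^+ _).
  have hi := ltn_ord i.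
  rewrite -expnSr; congr (2 ^ _)%N; lia.
rewrite IH expnS mulnC exprM.
have h1 := hF n; have h2 := hF n.+1.
field; by rewrite ?h1 ?h2.
Qed.

Section Cong.
Variables (r : nat) (a : 'I_r -> nat) (N : nat).
Hypothesis N0 : (0 < N)%N.
Hypothesis aN : forall k, (a k %| N)%N.

Lemma cg_scale j (x : grp a) i : (gscale j x i = j * x i %[mod a i])%N.
Proof. by rewrite /gscale ffunE /= modn_mod. Qed.

Lemma cg_add (z : grp a) u i : (z i = u %[mod a i])%N ->
  (gadd z z i = 2 * u %[mod a i])%N.
Proof.
move=> h; rewrite /gadd ffunE /= modn_mod -modnDm h modnDm.
by rewrite mul2n addnn.
Qed.

Lemma cg_opp (z : grp a) u i : (z i = u %[mod a i])%N ->
  (gopp z i = (N - 1) * u %[mod a i])%N.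
Proof.
move=> h; apply/eqP; rewrite -(eqn_modDr u).
rewrite /gopp ffunE /= modnDml -modnDmr -h modnDmr subnK; last exact: ltnW.
rewrite -[X in _ == (X + _) %[mod _]]mulnC -mulnSr subn1 prednK //.
rewrite modnn; apply/eqP; apply/esym/eqP; rewrite -/(dvdn _ _); exact: dvdn_mull.
Qed.
End Cong.

Theorem theorem3 (R : realType) (r : nat) (a : 'I_r -> nat)
  (ha : forall k, (0 < a k)%N) (N : nat) (hN : is_exponent a N) (hodd : odd N)
  (f : grp a -> rat) (x : grp a) (hx : fhat R f x != 0) :
  (forall k : nat, (k < totient N)%N -> Mhat2 R f (gscale (2 ^ k.+1) x) != 0) /\
  fhat R f x ^+ (2 ^ totient N).-1 =
  \prod_(k < totient N)
     (Mhat3 R f (gscale (2 ^ k) x) (gscale (2 ^ k) x)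
        / Mhat2 R f (gscale (2 ^ k.+1) x)) ^+ (2 ^ (totient N - 1 - k)).
Proof.
have [N0 [hNall _]] := hN.
have aN : forall k, (a k %| N)%N.
  move=> k; pose x1 : grp a := [ffun j => Ordinal (ltn_pmod 1 (ha j))].
  have := hNall x1 k; rewrite /gscale ffunE /= ffunE /= => h.
  by rewrite /dvdn -[N]muln1 -modnMmr h.
set Q := Pol r a N f x.
set w := om R N.
have omN' : w ^+ N = 1 := @omN R N N0.
have FP : forall (z : grp a) k, (forall i, z i = k * x i %[mod a i])%N ->
    fhat R f z = (map_poly ratr Q).[w ^+ k].
  by move=> z k h; apply: (@fhat_pol R r a N N0 aN f x z k h).
have [M pM MN] := prim_order_exists N0 omN'.
have hx1 : fhat R f x = (map_poly ratr Q).[w ^+ 1] by apply: FP => i; rewrite mul1n.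
have nz : forall k, coprime k N -> (map_poly ratr Q).[w ^+ k] != 0.
  move=> k ck; apply: contra hx => hk.
  rewrite hx1 expr1.
  apply: (@galois_root _ M w Q k pM) => //.
  exact: coprime_dvdr MN ck.
pose Fv j := (map_poly ratr Q).[w ^+ (2 ^ j)].
pose Gv j := (map_poly ratr Q).[w ^+ ((N - 1) * 2 ^ j)].
have c2 : coprime 2 N by rewrite coprime2n.
have nzF : forall j, Fv j != 0 by move=> j; apply: nz; apply: coprimeXl.
have nzG : forall j, Gv j != 0.
  move=> j; apply: nz; rewrite coprimeMl coprimeXl // andbT subn1.
  exact: coprimePn.
have EF : forall j, fhat R f (gscale (2 ^ j) x) = Fv j.
  by move=> j; apply: FP => i; apply: cg_scale.
have EG : forall j, fhat R f (gopp (gscale (2 ^ j) x)) = Gv j.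
  move=> j; apply: FP => i; rewrite -mulnA.
  by apply: (@cg_opp r a N N0 aN); apply: cg_scale.
have EG' : forall j, fhat R f (gopp (gadd (gscale (2 ^ j) x) (gscale (2 ^ j) x))) = Gv j.+1.
  move=> j; apply: FP => i; rewrite expnS -!mulnA.
  by apply: (@cg_opp r a N N0 aN); apply: cg_add; apply: cg_scale.
split.
  move=> k _; rewrite /Mhat2 EF EG; exact: mulf_neq0.
set n := totient N.
rewrite (eq_bigr (fun k : 'I_n => (Fv k ^+ 2 / Fv k.+1) ^+ (2 ^ (n - 1 - k)))); last first.
  move=> k _; rewrite /Mhat3 /Mhat2 EF EG EG' EF.
  have h1 := nzF k.+1; have h2 := nzG k.+1.
  congr (_ ^+ _); field; by rewrite ?h1 ?h2.
rewrite telesc //.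
have -> : Fv n = Fv 0%N.
  rewrite /Fv -(expr_mod (2 ^ n) omN') Euler_exp_totient // expr_mod //.
have -> : fhat R f x = Fv 0%N by rewrite hx1 /Fv expn0.
have := nzF 0%N; set F0 := Fv 0%N => h0.
have e : (2 ^ n = (2 ^ n).-1.+1)%N by rewrite prednK // expn_gt0.
by rewrite [in RHS]e exprS mulrAC divff // mul1r.
Qed.
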